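(* Let $p,q$ be non-zero coprime integers, and let $1\le k\le |p|-1$, $1\le l\le |q|-1$. Let $z_{ij}\in\mathbb{C}$ ($0\le i\le |q|$, $0\le j\le |p|-1$) be the coordinate of the vertex $v^{|p|,k}_{[i+j+1]}$ of the moving polygon after the $i$-th step of the $(|p|,k;|q|,l)$-trochoid (the $0$-th step being the initial position). Then (i) $z_{i0}=z_{i+1,|p|-1}$ for $0\le i\le |q|-1$; (ii) the rotation about $z_{i0}$ by angle $\theta(|p|,k;|q|,l)$ sends $z_{ij}$ to $z_{i+1,j-1}$ for $0\le i\le|q|-1$, $1\le j\le |p|-1$; (iii) $z_{|q|j}=z_{0j}$ for $0\le j\le|p|-1$; and not all $z_{ij}$ are equal. Consequently, $a_{ij}\mapsto (z_{ij},e^{\theta(|p|,k;|q|,l)\sqrt{-1}})$ is a non-trivial $\mathrm{Rot}(\mathbb{E}^2)$-coloring of the standard diagram $D(p,q)$ of the $(p,q)$-torus knot, with all rotation angles equal to $\theta(|p|,k;|q|,l)$.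
   Context: $\mathrm{Rot}(\mathbb{E}^2)=\mathbb{C}\times\mathrm{U}(1)$ with $(z,e^{\theta\sqrt{-1}})\ast(w,e^{\eta\sqrt{-1}})=((z-w)e^{\eta\sqrt{-1}}+w,e^{\theta\sqrt{-1}})$, i.e. the quandle of rotations of the plane, $(z,e^{\theta\sqrt{-1}})$ being the rotation about $z$ by $\theta$; a coloring of a diagram assigns quandle elements to arcs so that at each crossing (outgoing under arc) $=$ (incoming under arc) $\ast$ (over arc) for the appropriate orientation convention; constant colorings are trivial. Regular polygons: for $m\ge2$ let $v^m_0,\dots,v^m_{m-1}$ be the vertices, in counterclockwise order, of a convex regular $m$-gon in $\mathbb{C}$; for $1\le k\le m-1$ put $v^{m,k}_i=v^m_{[ik]}$, where $[r]\in\{0,\dots,m-1\}$ is the residue of $r$ mod $m$, and let $\Pi(m,k)$ be the (possibly degenerate, star) polygon joining $v^{m,k}_{[i]}$ to $v^{m,k}_{[i+1]}$ for all $i$. For $m,n\ge2$, $1\le k\le m-1$, $1\le l\le n-1$ set $\theta(m,k;n,l)=\bigl(\frac{m-2k}{m}-\frac{n-2l}{n}\bigr)\pi$. The $(m,k;n,l)$-trochoid: take $\Pi(m,k)$ and $\Pi(n,l)$ with equal side lengths, placed so that $v^{m,k}_{[0]}=v^{n,l}_{[0]}$ and $v^{m,k}_{[1]}=v^{n,l}_{[1]}$. Keeping $\Pi(n,l)$ fixed, at the $i$-th step ($i=1,2,\dots$) rotate $\Pi(m,k)$ about its vertex $v^{m,k}_{[i]}$ (which then coincides with $v^{n,l}_{[i]}$,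 indices of $\Pi(n,l)$ taken mod $n$) by angle $\theta(m,k;n,l)$; after this step $v^{m,k}_{[i+1]}$ coincides with $v^{n,l}_{[i+1]}$. Explicitly, with $u_j=v^{n,l}_{[j]}$, $d=u_1-u_0$, $\omega=e^{2\pi k\sqrt{-1}/m}$, $\zeta=e^{2\pi l\sqrt{-1}/n}$, one has $u_{j+1}-u_j=d\zeta^j$, and after the $i$-th step the vertex $v^{m,k}_{[i+j+1]}$ of the moving polygon is at $u_i+d\zeta^i(1+\omega+\dots+\omega^j)$ for $0\le j\le m-1$. The diagram $D(p,q)$: a diagram of the $(p,q)$-torus knot (closed $|p|$-strand braid diagram with $|q|$ blocks) whose arcs are labelled $a_{ij}$, $0\le i\le |q|$, $0\le j\le|p|-1$, with $a_{i0}$ and $a_{i+1,|p|-1}$ denoting the same arc and $a_{|q|j}$, $a_{0j}$ denoting the same arc; in the $i$-th block the arc $a_{i0}$ passes over the strands, and for $1\le j\le|p|-1$ there is a crossing with over arc $a_{i0}$, incoming under arc $a_{ij}$ and outgoing under arc $a_{i+1,j-1}$, whose coloring condition reads $\mathrm{color}(a_{i+1,j-1})=\mathrm{color}(a_{ij})\ast\mathrm{color}(a_{i0})$. *)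

(* Defs.v *)
From Stdlib Require Import Reals ZArith Arith Lia Lra.
Open Scope R_scope.

Definition Cx : Type := (R * R)%type.
Definition Cadd (z w : Cx) : Cx := (fst z + fst w, snd z + snd w).
Definition Csub (z w : Cx) : Cx := (fst z - fst w, snd z - snd w).
Definition Cmul (z w : Cx) : Cx :=
  (fst z * fst w - snd z * snd w, fst z * snd w + snd z * fst w).
Definition C1 : Cx := (1, 0).
Definition Cexpi (t : R) : Cx := (cos t, sin t).
Fixpoint Cpow (z : Cx) (n : nat) : Cx :=
  match n with O => C1 | S n' => Cmul (Cpow z n') z end.
Fixpoint Cgeom (w : Cx) (j : nat) : Cx :=
  match j with O => C1 | S j' => Cadd (Cgeom w j') (Cpow w j) end.

Definition rotate (w : Cx) (eta : R) (z : Cx) : Cx :=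
  Cadd (Cmul (Csub z w) (Cexpi eta)) w.

(* The quandle Rot(E^2) = Cx x U(1); elements are pairs (z, u) with |u| = 1.
   (z, e^{theta i}) * (w, e^{eta i}) = ((z - w) e^{eta i} + w, e^{theta i}). *)
Definition RotE : Type := (Cx * Cx)%type.
Definition rot_op (x y : RotE) : RotE :=
  (Cadd (Cmul (Csub (fst x) (fst y)) (snd y)) (fst y), snd x).

Definition theta (m k n l : nat) : R :=
  ((INR m - 2 * INR k) / INR m - (INR n - 2 * INR l) / INR n) * PI.

(* Coordinates of the (m,k;n,l)-trochoid, placed with u_0 = u0 and
   d = u_1 - u_0 (side vector, d <> 0):
   omega = e^{2 pi k i/m}, zeta = e^{2 pi l i/n},
   u_i = u0 + d (1 + zeta + ... + zeta^{i-1}),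
   z_{ij} = position of v^{m,k}_{[i+j+1]} after the i-th step
          = u_i + d zeta^i (1 + omega + ... + omega^j). *)
Definition tro_u (n l : nat) (u0 d : Cx) (i : nat) : Cx :=
  match i with
  | O => u0
  | S i' => Cadd u0 (Cmul d (Cgeom (Cexpi (2 * PI * INR l / INR n)) i'))
  end.
Definition tro_z (m k n l : nat) (u0 d : Cx) (i j : nat) : Cx :=
  Cadd (tro_u n l u0 d i)
       (Cmul (Cmul d (Cpow (Cexpi (2 * PI * INR l / INR n)) i))
             (Cgeom (Cexpi (2 * PI * INR k / INR m)) j)).

(* Arcs are labelled a_{ij}, 0 <= i <= |q|, 0 <= j <= |p|-1, with
   a_{i0} = a_{i+1,|p|-1} and a_{|q|j} = a_{0j}; a coloring is an assignment
   c i j to the labels compatible with these identifications and satisfying the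
   crossing conditions c(a_{i+1,j-1}) = c(a_{ij}) * c(a_{i0}). *)
Definition Dpq_coloring (p q : Z) (c : nat -> nat -> RotE) : Prop :=
  let P := Z.abs_nat p in
  let Q := Z.abs_nat q in
  (forall i, (i < Q)%nat -> c i O = c (S i) (P - 1)%nat) /\
  (forall j, (j < P)%nat -> c Q j = c O j) /\
  (forall i j, (i < Q)%nat -> (1 <= j <= P - 1)%nat ->
     c (S i) (j - 1)%nat = rot_op (c i j) (c i O)).

Definition Dpq_nontrivial (p q : Z) (c : nat -> nat -> RotE) : Prop :=
  exists i j i' j',
    (i <= Z.abs_nat q)%nat /\ (j < Z.abs_nat p)%nat /\
    (i' <= Z.abs_nat q)%nat /\ (j' < Z.abs_nat p)%nat /\
    c i j <> c i' j'.

(* Main.v *)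
From Pilot Require Import Defs.
From Stdlib Require Import Reals ZArith Arith Lia Lra.
Open Scope R_scope.

Local Notation CC1 := Pilot.Defs.C1.
Definition C0 : Cx := (0, 0).
Definition Uf (Zz u0 d : Cx) (i : nat) : Cx :=
  match i with O => u0 | S i' => Cadd u0 (Cmul d (Cgeom Zz i')) end.
Definition zz (W Zz u0 d : Cx) (i j : nat) : Cx :=
  Cadd (Uf Zz u0 d i) (Cmul (Cmul d (Cpow Zz i)) (Cgeom W j)).

Ltac cxd := repeat match goal with x : Cx |- _ => destruct x end.
Ltac cx := unfold Cadd, Csub, Cmul, Pilot.Defs.C1, C0, Cexpi, rotate in *; cxd; simpl;
  try (f_equal; ring).

Lemma Cpow_S w n : Cpow w (S n) = Cmul (Cpow w n) w.
Proof. reflexivity. Qed.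
Lemma Cgeom_S w n : Cgeom w (S n) = Cadd (Cgeom w n) (Cpow w (S n)).
Proof. reflexivity. Qed.

Lemma Cpow_Sl w n : Cpow w (S n) = Cmul w (Cpow w n).
Proof.
  induction n. simpl. cx.
  rewrite Cpow_S, IHn. generalize (Cpow w n). intro c. cx.
Qed.

Lemma Cgeom_Sl w j : Cgeom w (S j) = Cadd CC1 (Cmul w (Cgeom w j)).
Proof.
  induction j. simpl. cx.
  rewrite (Cgeom_S w (S j)). rewrite IHj at 1. rewrite (Cgeom_S w j), (Cpow_Sl w (S j)).
  generalize (Cgeom w j) (Cpow w (S j)). intros a b. cx.
Qed.

Lemma Cgeom_mul w j : Cmul (Csub w CC1) (Cgeom w j) = Csub (Cpow w (S j)) CC1.
Proof.
  induction j. simpl. cx.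
  rewrite Cgeom_S.
  assert (H : forall a b c, Cmul a (Cadd b c) = Cadd (Cmul a b) (Cmul a c)) by (intros; cx).
  rewrite H, IHj, (Cpow_S w (S j)). generalize (Cpow w (S j)). intro c. cx.
Qed.

Lemma Cmul_integral a b : a <> C0 -> Cmul a b = C0 -> b = C0.
Proof.
  destruct a as [x y], b as [u v]. unfold Cmul, C0; simpl. intros Ha H.
  injection H as H1 H2.
  assert (Hs : x*x + y*y <> 0).
  { intro Hs. apply Ha. assert (x = 0) by nra. assert (y = 0) by nra. subst; auto. }
  assert (Hu : (x*x+y*y) * u = 0) by (replace ((x*x+y*y)*u) with (x*(x*u-y*v) + y*(x*v+y*u)) by ring; rewrite H1, H2; ring).
  assert (Hv : (x*x+y*y) * v = 0) by (replace ((x*x+y*y)*v) with (x*(x*v+y*u) - y*(x*u-y*v)) by ring; rewrite H1, H2; ring).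
  apply Rmult_integral in Hu; apply Rmult_integral in Hv.
  destruct Hu; [contradiction|]; destruct Hv; [contradiction|]. subst; auto.
Qed.

Lemma geom_zero w m : (1 <= m)%nat -> Cpow w m = CC1 -> w <> CC1 -> Cgeom w (m - 1) = C0.
Proof.
  intros Hm Hp Hw. apply (Cmul_integral (Csub w CC1)).
  - intro H. apply Hw. destruct w as [a b]. unfold Csub, Pilot.Defs.C1, C0 in *; simpl in *.
    injection H as H1 H2. f_equal; lra.
  - rewrite Cgeom_mul. replace (S (m - 1)) with m by lia. rewrite Hp. cx.
Qed.

Lemma Cexpi_add a b : Cmul (Cexpi a) (Cexpi b) = Cexpi (a + b).
Proof. unfold Cmul, Cexpi; simpl. rewrite cos_plus, sin_plus. f_equal; ring. Qed.

Lemma Cpow_expi a n : Cpow (Cexpi a) n = Cexpi (INR n * a).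
Proof.
  induction n. simpl. rewrite Rmult_0_l. unfold Cexpi, Pilot.Defs.C1. rewrite cos_0, sin_0. auto.
  rewrite Cpow_S, IHn, Cexpi_add, S_INR. f_equal. ring.
Qed.

Lemma root_one k m : (m <> 0)%nat -> Cpow (Cexpi (2 * PI * INR k / INR m)) m = CC1.
Proof.
  intro Hm. rewrite Cpow_expi.
  assert (HR : INR m <> 0) by (apply not_0_INR; auto).
  replace (INR m * (2 * PI * INR k / INR m)) with (0 + 2 * INR k * PI) by (field; auto).
  unfold Cexpi, Pilot.Defs.C1. rewrite cos_period, sin_period, cos_0, sin_0. auto.
Qed.

Lemma root_ne1 k m : (1 <= k <= m - 1)%nat -> Cexpi (2 * PI * INR k / INR m) <> CC1.
Proof.
  intros Hk. assert (Hm : (2 <= m)%nat) by lia.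
  assert (HR : 0 < INR m) by (apply lt_0_INR; lia).
  assert (Hk1 : 1 <= INR k) by (apply (le_INR 1); lia).
  assert (Hkm : INR k < INR m) by (apply lt_INR; lia).
  set (x := 2 * PI * INR k / INR m).
  assert (H0 : 0 < x / 2).
  { unfold x. apply Rdiv_lt_0_compat; [|lra]. apply Rdiv_lt_0_compat; [|lra].
    pose proof PI_RGT_0. nra. }
  assert (H1 : x / 2 < PI).
  { unfold x. apply Rmult_lt_reg_r with (2 * INR m). nra.
    field_simplify; [|lra]. pose proof PI_RGT_0. nra. }
  pose proof (sin_gt_0 _ H0 H1) as Hs.
  unfold Cexpi, Pilot.Defs.C1. intro H. injection H as Hc _.
  replace x with (2 * (x/2)) in Hc by field. rewrite cos_2a_sin in Hc. nra.
Qed.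

Lemma abstract (m n : nat) (W Zz E u0 d : Cx) :
  (2 <= m)%nat -> (2 <= n)%nat -> Cgeom W (m-1) = C0 -> Cgeom Zz (n-1) = C0 ->
  Cpow Zz n = CC1 -> Cmul E W = Zz -> d <> C0 ->
  let z := zz W Zz u0 d in
  (forall i, (i <= n - 1)%nat -> z i O = z (S i) (m - 1)%nat) /\
  (forall i j, (i <= n - 1)%nat -> (1 <= j <= m - 1)%nat ->
     Cadd (Cmul (Csub (z i j) (z i O)) E) (z i O) = z (S i) (j - 1)%nat) /\
  (forall j, (j <= m - 1)%nat -> z n j = z O j) /\
  z O O <> z O (m - 1)%nat.
Proof.
  intros Hm Hn HGm HGn HZn HE Hd z. unfold z, zz.
  assert (US : forall i, Uf Zz u0 d (S i) = Cadd (Uf Zz u0 d i) (Cmul d (Cpow Zz i))).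
  { intro i. destruct i. simpl. cx. unfold Uf. rewrite Cgeom_S, Cpow_S.
    generalize (Cgeom Zz i) (Cpow Zz i). intros a b. cx. }
  split; [|split; [|split]].
  - intros i Hi. rewrite HGm, US, Cpow_S. simpl Cgeom.
    generalize (Uf Zz u0 d i) (Cpow Zz i). intros a b. cx.
  - intros i j Hi Hj. destruct j as [|j']; [lia|].
    replace (S j' - 1)%nat with j' by lia.
    rewrite Cgeom_Sl, US, Cpow_S, <- HE. simpl Cgeom.
    generalize (Uf Zz u0 d i) (Cpow Zz i) (Cgeom W j'). intros a b c. cx.
  - intros j Hj. rewrite HZn. destruct n as [|n']; [lia|].
    replace (S n' - 1)%nat with n' in HGn by lia. unfold Uf. rewrite HGn.
    simpl Cpow. generalize (Cgeom W j). intro c. cx.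
  - rewrite HGm. simpl. intro H. apply Hd. cx.
    injection H as H1 H2. f_equal; lra.
Qed.

Theorem mainTheorem5 (p q : Z) (k l : nat) (u0 d : Cx) :
  p <> 0%Z -> q <> 0%Z -> Z.gcd p q = 1%Z ->
  (1 <= k <= Z.abs_nat p - 1)%nat -> (1 <= l <= Z.abs_nat q - 1)%nat ->
  d <> (0, 0) ->
  let m := Z.abs_nat p in
  let n := Z.abs_nat q in
  let th := theta m k n l in
  let z := tro_z m k n l u0 d in
  (forall i, (i <= n - 1)%nat -> z i O = z (S i) (m - 1)%nat) /\
  (forall i j, (i <= n - 1)%nat -> (1 <= j <= m - 1)%nat ->
     rotate (z i O) th (z i j) = z (S i) (j - 1)%nat) /\
  (forall j, (j <= m - 1)%nat -> z n j = z O j) /\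
  (exists i j i' j', (i <= n)%nat /\ (j <= m - 1)%nat /\
     (i' <= n)%nat /\ (j' <= m - 1)%nat /\ z i j <> z i' j') /\
  Dpq_coloring p q (fun i j => (z i j, Cexpi th)) /\
  Dpq_nontrivial p q (fun i j => (z i j, Cexpi th)).
Proof.
  intros Hp Hq _ Hk Hl Hd m n th z.
  assert (Hm : (2 <= m)%nat) by (unfold m; lia).
  assert (Hn : (2 <= n)%nat) by (unfold n; lia).
  assert (HRm : INR m <> 0) by (apply not_0_INR; lia).
  assert (HRn : INR n <> 0) by (apply not_0_INR; lia).
  assert (HE : Cmul (Cexpi th) (Cexpi (2 * PI * INR k / INR m)) =
               Cexpi (2 * PI * INR l / INR n)).
  { rewrite Cexpi_add. f_equal. unfold th, theta. field. auto. }
  destruct (abstract m n (Cexpi (2 * PI * INR k / INR m)) (Cexpi (2 * PI * INR l / INR n))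
              (Cexpi th) u0 d Hm Hn) as [H1 [H2 [H3 H4]]].
  - apply geom_zero. lia. apply root_one. lia. apply root_ne1. unfold m in *; lia.
  - apply geom_zero. lia. apply root_one. lia. apply root_ne1. unfold n in *; lia.
  - apply root_one. lia.
  - exact HE.
  - exact Hd.
  - split; [exact H1|]. split; [exact H2|]. split; [exact H3|].
    split; [|split].
    + exists O, O, O, (m - 1)%nat. repeat split; try lia. exact H4.
    + split; [|split].
      * intros i Hi. simpl. f_equal. apply H1. fold n in Hi. lia.
      * intros j Hj. simpl. f_equal. apply H3. fold m in Hj. lia.
      * intros i j Hi Hj. unfold rot_op; simpl. symmetry. f_equal. apply H2; unfold n, m; lia.
    + exists O, O, O, (m - 1)%nat. repeat split; try (unfold m, n; lia).
      intro H. apply H4. exact (f_equal fst H).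
Qed.
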